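(* Let $A\subseteq[n]$ be nonempty. There is a bijection $\rho$ from the set of rooted trees on $A$ in which $\max(A)$ is a leaf to the set of ordered forests on $A\setminus\{\max(A)\}$.
   Context: A rooted tree on a finite set $A$ is a tree with vertex set $A$ and a distinguished vertex (the root); a leaf is a vertex with no children (children being taken with respect to the root). An ordered forest on a finite set $X$ is a tuple of rooted trees whose vertex sets form a partition of $X$ (the empty tuple when $X=\emptyset$). *)

(* Defs.v *)
From mathcomp Require Import all_boot.
Set Implicit Arguments. Unset Strict Implicit. Unset Printing Implicit Defensive.

(* A (simple, undirected) graph on a finite type is given by its edge set,
   a set of 2-element subsets. Adjacency relation of an edge set: *)
Definition adj (T : finType) (E : {set {set T}}) : rel T :=
  fun x y => [set x; y] \in E.

Definition is_rooted_tree (T : finType) (V : {set T}) (E : {set {set T}}) (r : T)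
  : Prop :=
  [/\ r \in V,
      (forall e, e \in E ->
         exists x y, [/\ x \in V, y \in V, x != y & e = [set x; y]]),
      (forall x y, x \in V -> y \in V -> connect (adj E) x y)
    & (forall s : seq T, uniq s -> 2 < size s -> ~~ cycle (adj E) s)].

(* u is a child of v (w.r.t. root r) in the tree with edges E:
   {u,v} is an edge and, after deleting this edge, v is still connected
   to the root (so the edge points away from the root, from v to u). *)
Definition is_child (T : finType) (E : {set {set T}}) (r u v : T) : Prop :=
  [set u; v] \in E /\ connect (adj (E :\ [set u; v])) r v.

Definition is_leaf (T : finType) (E : {set {set T}}) (r v : T) : Prop :=
  forall u, ~ is_child E r u v.

Definition rooted_tree_on (T : finType) (A : {set T})
  (t : {set {set T}} * T) : Prop :=
  is_rooted_tree A t.1 t.2.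

(* Ordered forests on X: finite sequences of rooted trees
   (vertex set, edge set, root) whose vertex sets form a partition of X
   (blocks are nonempty since they contain the root; pairwise disjoint;
   union equal to X). For X empty this is only the empty sequence. *)
Definition ordered_forest_on (T : finType) (X : {set T})
  (f : seq ({set T} * {set {set T}} * T)) : Prop :=
  let Vs := map (fun t => t.1.1) f in
  [/\ (forall t, t \in f -> is_rooted_tree t.1.1 t.1.2 t.2),
      (forall i j, i < size f -> j < size f -> i != j ->
          [disjoint (nth set0 Vs i) & (nth set0 Vs j)])
    & \bigcup_(V <- Vs) V = X].

Definition bij_between (A B : Type) (P : A -> Prop) (Q : B -> Prop) (f : A -> B)
  : Prop :=
  [/\ (forall x, P x -> Q (f x)),
      (forall x y, P x -> P y -> f x = f y -> x = y)
    & (forall y, Q y -> exists x, P x /\ f x = y)].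

(* Main.v *)
Require Import Defs.
From mathcomp Require Import all_boot.
From Stdlib Require Import ClassicalEpsilon.
Set Implicit Arguments. Unset Strict Implicit. Unset Printing Implicit Defensive.

Section G.
Variable T : finType.
Implicit Types (E : {set {set T}}) (V A : {set T}).

Definition Fp E := forall x y, [set x; y] \in E -> x != y ->
  ~~ connect (adj (E :\ [set x; y])) x y.
Definition wf V E := forall e, e \in E ->
  exists x y, [/\ x \in V, y \in V, x != y & e = [set x; y]].
Definition acyc E := forall s : seq T, uniq s -> 2 < size s -> ~~ cycle (adj E) s.

Lemma adj_sym E : symmetric (adj E).
Proof. by move=> x y; rewrite /adj setUC. Qed.

Lemma csym E x y : connect (adj E) x y = connect (adj E) y x.
Proof. exact: (sym_connect_sym (adj_sym E)). Qed.

Lemma csub E1 E2 x y : E1 \subset E2 -> connect (adj E1) x y -> connect (adj E2) x y.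
Proof.
move=> s; apply: connect_sub => a b h; apply: connect1; exact: (subsetP s).
Qed.

Lemma set2_eq (a b c d : T) : [set a; b] = [set c; d] ->
  (a = c /\ b = d) \/ (a = d /\ b = c).
Proof.
move=> E.
have ha : a \in [set c; d] by rewrite -E set21.
have hb : b \in [set c; d] by rewrite -E set22.
have hc : c \in [set a; b] by rewrite E set21.
have hd : d \in [set a; b] by rewrite E set22.
move: ha hb hc hd; rewrite !inE.
case/orP=> /eqP ha; case/orP=> /eqP hb; case/orP=> /eqP hc; case/orP=> /eqP hd;
  subst; auto.
Qed.

Lemma wf_mem V E a b : wf V E -> [set a; b] \in E -> [/\ a \in V, b \in V & a != b].
Proof.
move=> w /w [x [y [xV yV xy /set2_eq [[-> ->]|[-> ->]]]]]; split=> //.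
by rewrite eq_sym.
Qed.

Lemma wf_sub V E E' : E' \subset E -> wf V E -> wf V E'.
Proof. by move=> s w e /(subsetP s) /w. Qed.

Lemma connect_restrict (e e' : rel T) (S : {set T}) :
  (forall x y, x \in S -> e x y -> e' x y && (y \in S)) ->
  forall x y, x \in S -> connect e x y -> connect e' x y && (y \in S).
Proof.
move=> H x y xS /connectP [p pp ->].
elim: p x xS pp => [|z p IH] x xS /=; first by rewrite connect0 xS.
case/andP=> exz pz; case/andP: (H _ _ xS exz) => e'xz zS.
case/andP: (IH _ zS pz) => c l.
by rewrite l (connect_trans (connect1 e'xz) c).
Qed.

Lemma connect_addedge E x y u v :
  connect (adj ([set x; y] |: E)) u v ->
  connect (adj E) u v \/ (connect (adj E) u x /\ connect (adj E) y v) \/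
  (connect (adj E) u y /\ connect (adj E) x v).
Proof.
move/connectP=> [p pp lv].
elim: p u pp lv => [|w p IH] u /=; first by move=> _ ->; left; exact: connect0.
case/andP=> uw /IH {IH} IH /IH {IH} IH.
move: uw => /setU1P [/set2_eq [[eu ew]|[eu ew]] | uwE]; try subst u w.
- case: IH => [h|[[h1 h2]|[h1 h2]]].
  + by right; left; split; [exact: connect0|].
  + by right; left; split; [exact: connect0|].
  + by left.
- case: IH => [h|[[h1 h2]|[h1 h2]]].
  + by right; right; split; [exact: connect0|].
  + by left.
  + by right; right; split; [exact: connect0|].
- have c := connect1 (uwE : adj E u w).
  case: IH => [h|[[h1 h2]|[h1 h2]]].
  + by left; exact: connect_trans c h.
  + by right; left; split=> //; exact: connect_trans c h1.
  + by right; right; split=> //; exact: connect_trans c h1.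
Qed.

Lemma acyc_F E : acyc E -> Fp E.
Proof.
move=> H x y xyE xy; apply/negP => /connectP [p pp lp].
case/shortenP: pp lp => p' pp' up' _ lp.
case: p' pp' up' lp => [|z [|w q]].
- by move=> _ _ /= yx; rewrite yx eqxx in xy.
- rewrite /= andbT => h _ yz; move: h; rewrite -yz /adj in_setD1 eqxx //.
- move=> pp' up' ly; apply: (negP (H [:: x, z, w & q] up' isT)).
  rewrite /cycle rcons_path; apply/andP; split.
  + apply: sub_path pp'; move=> a b; rewrite /adj in_setD1 => /andP [_ ->] //.
  + by rewrite -ly /adj setUC.
Qed.

Lemma path_avoid E x y z s : x \notin z :: s -> path (adj E) z s ->
  path (adj (E :\ [set x; y])) z s.
Proof.
elim: s z => [|w s IH] z //= nx /andP [azw pw].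
move: nx; rewrite !in_cons !negb_or => /andP [xz /andP [xw xs]].
rewrite IH ?in_cons ?negb_or ?xw ?xs // andbT.
rewrite /adj in_setD1 (azw : [set z; w] \in E) andbT; apply/negP => /eqP /set2_eq [[zx _]|[zy wx]].
- by rewrite zx eqxx in xz.
- by rewrite wx eqxx in xw.
Qed.

Lemma F_acyc E : Fp E -> acyc E.
Proof.
move=> H [|x [|z [|w q]]] // us _; apply/negP.
rewrite /cycle rcons_path => /andP [pp ly].
set y := last x [:: z, w & q] in ly.
have yq : y \in w :: q by rewrite /y /= mem_last.
move: (us); rewrite /= !in_cons !negb_or => /andP [/and3P [xz xw xq] /andP [/andP [zw zq] _]].
have xy : x != y.
  by apply/eqP => exy; move: yq; rewrite -exy in_cons (negbTE xw) (negbTE xq).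
have zy : z != y.
  by apply/eqP => ezy; move: yq; rewrite -ezy in_cons (negbTE zw) (negbTE zq).
have e : [set x; y] \in E by rewrite /adj setUC in ly.
apply: (negP (H x y e xy)); apply/connectP; exists [:: z, w & q] => //.
move: pp => /= /andP [axz pz]; apply/andP; split.
- rewrite /adj in_setD1 (axz : [set x; z] \in E) andbT; apply/negP => /eqP /set2_eq [[_ zy']|[xy' _]].
  + by rewrite zy' eqxx in zy.
  + by rewrite xy' eqxx in xy.
- have := @path_avoid E x y z [:: w & q]; apply=> //.
  by rewrite !in_cons !negb_or xz xw.
Qed.


Lemma disjF (A B : {set T}) x : [disjoint A & B] -> x \in A -> x \in B -> False.
Proof. by move=> d xA; rewrite (disjointFr d xA). Qed.

Lemma union_closed V1 V2 E1 E2 x y : wf V1 E1 -> wf V2 E2 -> [disjoint V1 & V2] ->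
  x \in V1 -> adj (E1 :|: E2) x y -> adj E1 x y && (y \in V1).
Proof.
move=> w1 w2 d xV; rewrite /adj in_setU => /orP [h|h].
- by rewrite h; case: (wf_mem w1 h).
- by case: (wf_mem w2 h) => xV2 _ _; case: (disjF d xV xV2).
Qed.

Lemma F_union_l V1 V2 E1 E2 : wf V1 E1 -> wf V2 E2 -> [disjoint V1 & V2] -> Fp E1 ->
  forall x y, [set x; y] \in E1 -> x != y ->
  ~~ connect (adj ((E1 :|: E2) :\ [set x; y])) x y.
Proof.
move=> w1 w2 d f1 x y e xy; apply/negP => c.
have [xV _ _] := wf_mem w1 e.
have w1' : wf V1 (E1 :\ [set x; y]) by apply: wf_sub w1; exact: subD1set.
have w2' : wf V2 (E2 :\ [set x; y]) by apply: wf_sub w2; exact: subD1set.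
move: c; rewrite setDUl => c.
have := connect_restrict (fun a b aV h => union_closed w1' w2' d aV h) xV c.
by case/andP => c' _; apply: (negP (f1 x y e xy)).
Qed.

Lemma F_union V1 V2 E1 E2 : wf V1 E1 -> wf V2 E2 -> [disjoint V1 & V2] -> Fp E1 -> Fp E2 ->
  Fp (E1 :|: E2).
Proof.
move=> w1 w2 d f1 f2 x y; rewrite in_setU => /orP [h|h] xy.
- exact: (F_union_l w1 w2 d f1).
- rewrite setUC; apply: (F_union_l w2 w1 _ f2) => //; by rewrite disjoint_sym.
Qed.

Lemma F_add E x y : Fp E -> x != y -> ~~ connect (adj E) x y -> Fp ([set x; y] |: E).
Proof.
move=> f xy nc.
have nE : [set x; y] \notin E by apply/negP => h; apply: (negP nc); exact: connect1.
move=> a b /setU1P [eab|abE] ab.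
- rewrite eab setU1K //.
  case: (set2_eq eab) => [[-> ->]|[-> ->]] //; by rewrite csym.
- have ne : [set x; y] != [set a; b] by apply/eqP => h; rewrite h abE in nE.
  have -> : ([set x; y] |: E) :\ [set a; b] = [set x; y] |: (E :\ [set a; b]).
    apply/setP => e; rewrite !inE; case: (e =P [set x; y]) => [->|] //=.
    by rewrite ne.
  apply/negP => /connect_addedge [h|[[h1 h2]|[h1 h2]]].
  + exact: (negP (f a b abE ab)).
  + apply: (negP nc).
    have s : E :\ [set a; b] \subset E := subD1set _ _.
    rewrite csym in h1; rewrite csym in h2.
    apply: connect_trans (csub s h1) _; apply: connect_trans _ (csub s h2).
    exact: connect1.
  + apply: (negP nc).
    have s : E :\ [set a; b] \subset E := subD1set _ _.
    apply: connect_trans (csub s h2) _; apply: connect_trans _ (csub s h1).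
    by apply: connect1; rewrite /adj setUC.
Qed.

Lemma tree_join V1 E1 r V2 E2 s : is_rooted_tree V1 E1 r -> is_rooted_tree V2 E2 s ->
  [disjoint V1 & V2] -> is_rooted_tree (V1 :|: V2) ([set r; s] |: (E1 :|: E2)) r.
Proof.
case=> rV1 w1 c1 a1 [sV2 w2 c2 a2] d.
have rs : r != s by apply/eqP => e; subst s; case: (disjF d rV1 sV2).
have sG : E1 :|: E2 \subset [set r; s] |: (E1 :|: E2) by apply: subsetUr.
have cr : forall x, x \in V1 :|: V2 -> connect (adj ([set r; s] |: (E1 :|: E2))) r x.
  move=> x; rewrite in_setU => /orP [h|h].
  - by apply: (csub sG); apply: (csub (subsetUl _ _)); apply: c1.
  - apply: connect_trans (connect1 _) _; first exact: (setU11 _ _ : adj _ r s).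
    by apply: (csub sG); apply: (csub (subsetUr _ _)); apply: c2.
split.
- by rewrite in_setU rV1.
- move=> e /setU1P [->|]; first by exists r, s; rewrite !in_setU rV1 sV2 orbT.
  rewrite in_setU => /orP [/w1|/w2] [x [y [xV yV xy ->]]]; exists x, y;
  by rewrite !in_setU ?xV ?yV ?orbT.
- move=> x y xV yV; apply: connect_trans (cr _ yV); rewrite csym; exact: cr.
- apply: F_acyc; apply: F_add => //.
  + by apply: (F_union w1 w2 d); apply: acyc_F.
  + apply/negP => c.
    have := connect_restrict (fun a b aV h => union_closed w1 w2 d aV h) rV1 c.
    by case/andP => _ sV1; case: (disjF d sV1 sV2).
Qed.

Lemma leaf_of E r m : r != m ->
  (forall u v, [set u; m] \in E -> [set v; m] \in E -> u = v) -> is_leaf E r m.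
Proof.
move=> rm uq u [um c]; rewrite csym in c.
case/connectP: c => [[|w p] /= pp lp]; first by rewrite lp eqxx in rm.
case/andP: pp => h _; move: h; rewrite /adj in_setD1 => /andP [ne h].
rewrite setUC in h; have wu := uq _ _ h um; subst w.
by rewrite setUC eqxx in ne.
Qed.

Lemma comp_tree A E c E0 : wf A E -> acyc E -> E0 \subset E ->
  is_rooted_tree [set x | connect (adj E0) c x]
    [set e in E0 | e \subset [set x | connect (adj E0) c x]] c.
Proof.
move=> w a s; set C := [set x | _].
have sub : [set e in E0 | e \subset C] \subset E.
  by apply/subsetP => e; rewrite inE => /andP [/(subsetP s) ? _].
split.
- by rewrite inE connect0.
- move=> e; rewrite inE => /andP [/(subsetP s) /w [x [y [_ _ xy ee]]] sC].
  exists x, y; split=> //; apply: (subsetP sC); by rewrite ee !inE eqxx ?orbT.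
- have cl : forall x, x \in C -> connect (adj [set e in E0 | e \subset C]) c x.
    move=> x xC.
    have /andP [h _] : connect (adj [set e in E0 | e \subset C]) c x && (x \in C).
      apply: (connect_restrict (e := adj E0) (S := C)).
      * move=> a0 b aC h; have bC : b \in C.
          by move: aC; rewrite !inE => h'; apply: connect_trans h' (connect1 h).
        by rewrite bC andbT /adj inE (h : [set a0; b] \in E0) subUset !sub1set aC bC.
      * by rewrite inE connect0.
      * by move: xC; rewrite inE.
    exact: h.
  move=> x y xC yC; apply: connect_trans (cl _ yC); rewrite csym; exact: cl.
- move=> q uq sz; apply/negP => cy; apply: (negP (a q uq sz)).
  apply: sub_cycle cy => x y; exact: (subsetP sub).
Qed.

End G.

Section F.
Variable T : finType.
Variable m : T.
Definition ft := ({set T} * {set {set T}} * T)%type.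
Definition U (f : seq ft) := \bigcup_(V <- map (fun t : ft => t.1.1) f) V.

Lemma disjP' (A B : {set T}) : (forall x, x \in A -> x \in B -> False) -> [disjoint A & B].
Proof.
move=> H; rewrite -setI_eq0; apply/eqP/setP => x; rewrite !inE.
by apply/negP => /andP [a b]; exact: H x a b.
Qed.

Lemma nth_sub (Vs : seq {set T}) j : j < size Vs ->
  nth set0 Vs j \subset \bigcup_(V <- Vs) V.
Proof.
elim: Vs j => [|W Vs IH] [|j] //= h; rewrite big_cons; first exact: subsetUl.
exact: subset_trans (IH _ h) (subsetUr _ _).
Qed.

Lemma mem_U (Vs : seq {set T}) x : x \in \bigcup_(V <- Vs) V ->
  exists2 j, j < size Vs & x \in nth set0 Vs j.
Proof.
elim: Vs => [|W Vs IH]; first by rewrite big_nil inE.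
rewrite big_cons in_setU => /orP [h|/IH [j hj h]]; first by exists 0.
by exists j.+1.
Qed.

Lemma ofc X V E r f : ordered_forest_on X ((V, E, r) :: f) <->
  [/\ is_rooted_tree V E r, ordered_forest_on (U f) f, [disjoint V & U f] &
      X = V :|: U f].
Proof.
split.
- case=> H1 H2 H3; split.
  + exact: (H1 (V, E, r) (mem_head _ _)).
  + split=> //.
    * by move=> t tf; apply: H1; rewrite in_cons tf orbT.
    * by move=> i j hi hj ij; exact: (H2 i.+1 j.+1 hi hj ij).
  + apply: disjP' => x xV /mem_U [j hj xj].
    rewrite size_map in hj.
    have d := H2 0 j.+1 isT hj isT.
    exact: disjF d xV xj.
  + by rewrite -H3 /= big_cons.
- case=> tr [H1 H2 H3] d ->; split.
  + by move=> t; rewrite in_cons => /orP [/eqP -> //|]; exact: H1.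
  + move=> [|i] [|j] //= hi hj ij.
    * by apply: disjointWr d; apply: nth_sub; rewrite size_map.
    * by rewrite disjoint_sym; apply: disjointWr d; apply: nth_sub; rewrite size_map.
    * exact: H2.
  + by rewrite /= big_cons.
Qed.

Fixpoint phi (f : seq ft) : {set {set T}} * T :=
  if f is t :: f' then ([set t.2; (phi f').2] |: (t.1.2 :|: (phi f').1), t.2)
  else (set0, m).

Lemma disjU1 (V W : {set T}) : m \notin V -> [disjoint V & W] -> [disjoint V & m |: W].
Proof.
move=> mV d; apply: disjP' => x xV /setU1P [xm|xW].
- by subst x; rewrite xV in mV.
- exact: disjF d xV xW.
Qed.

Lemma phi_valid f : forall X, ordered_forest_on X f -> m \notin X ->
  [/\ is_rooted_tree (m |: X) (phi f).1 (phi f).2,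
      (forall u v, [set u; m] \in (phi f).1 -> [set v; m] \in (phi f).1 -> u = v) &
      ((phi f).2 = m -> (phi f).1 = set0)].
Proof.
elim: f => [|[[V E] r] f IH] X.
- case=> _ _ /=; rewrite big_nil => <- _ /=; split=> //.
  + split.
    * exact: setU11.
    * by move=> e; rewrite inE.
    * by move=> x y; rewrite setU0 !inE => /eqP -> /eqP ->; exact: connect0.
    * by apply: F_acyc => x y; rewrite inE.
  + by move=> u v; rewrite inE.
- move/ofc => [tr of' d ->]; rewrite in_setU negb_or => /andP [mV mU].
  case: (IH _ of' mU) => tr' uq' r0'.
  have rV : r \in V by case: tr.
  have d' := disjU1 mV d.
  split => /=.
  + by rewrite setUCA; exact: tree_join tr tr' d'.
  + have key : forall w, [set w; m] \in [set r; (phi f).2] |: (E :|: (phi f).1) ->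
        (w = r /\ (phi f).2 = m) \/ [set w; m] \in (phi f).1.
      move=> w /setU1P [/set2_eq [[wr ms]|[ws mr]] | ].
      * by left.
      * by subst r; rewrite rV in mV.
      * rewrite in_setU => /orP [h|h]; last by right.
        case: tr => _ wV _ _; case: (wf_mem wV h) => _ mV' _.
        by rewrite mV' in mV.
    move=> u v /key [[ur sm]|hu] /key [[vr sm']|hv].
    * by rewrite ur vr.
    * by move: hv; rewrite (r0' sm) inE.
    * by move: hu; rewrite (r0' sm') inE.
    * exact: uq'.
  + by move=> rm; subst r; rewrite rV in mV.
Qed.


Lemma decomp V E r f X : ordered_forest_on X ((V, E, r) :: f) -> m \notin X ->
  let G := [set r; (phi f).2] |: (E :|: (phi f).1) in
  let s := (phi f).2 in
  [/\ [set r; s] \in G /\ connect (adj (G :\ [set r; s])) s m,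
      (forall u, [set r; u] \in G -> connect (adj (G :\ [set r; u])) u m -> u = s),
      V = [set x | connect (adj (G :\ [set r; s])) r x],
      E = [set e in G :\ [set r; s] | e \subset V] &
      (phi f).1 = [set e in G :\ [set r; s] | ~~ (e \subset V)]].
Proof.
move=> hof mX G s.
have [trG _ _] := phi_valid hof mX.
have FG : Fp G by case: trG => _ _ _ /acyc_F.
move/ofc: hof => [[rV wV cV aV] of' d eX].
have mU : m \notin U f by move: mX; rewrite eX in_setU negb_or => /andP [].
have mV : m \notin V by move: mX; rewrite eX in_setU negb_or => /andP [].
have [[sW wW cW aW] _ _] := phi_valid of' mU.
rewrite -/s in sW cW.
set T' := (phi f).1 in wW cW aW *.
set W := m |: U f in sW wW cW.
have d' : [disjoint V & W] := disjU1 mV d.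
have rW : r \notin W by apply/negP => h; exact: disjF d' rV h.
have sV : s \notin V by apply/negP => h; exact: disjF d' h sW.
have mW : m \in W by exact: setU11.
have rs : r != s by apply/eqP => e; rewrite e in rV; rewrite rV in sV.
have rsE : [set r; s] \notin E.
  by apply/negP => /(wf_mem wV) [_ sV' _]; rewrite sV' in sV.
have rsT : [set r; s] \notin T'.
  by apply/negP => /(wf_mem wW) [rW' _ _]; rewrite rW' in rW.
have TG : forall e, e \notin T' -> T' \subset G :\ e.
  move=> e eT; apply/subsetP => x xT; rewrite in_setD1 /G !in_setU1 in_setU xT !orbT andbT.
  by apply/eqP => h; rewrite -h xT in eT.
have EG : forall e, e \notin E -> E \subset G :\ e.
  move=> e eE; apply/subsetP => x xE; rewrite in_setD1 /G !in_setU1 in_setU xE !orbT andbT.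
  by apply/eqP => h; rewrite -h xE in eE.
split.
- split; first exact: setU11.
  exact: csub (TG _ rsT) (cW _ _ sW mW).
- move=> u /setU1P [/set2_eq [[_ ->] //|[rs' _]]|].
  + by rewrite rs' eqxx in rs.
  rewrite in_setU => /orP [h|h]; last first.
    by case: (wf_mem wW h) => rW' _ _; rewrite rW' in rW.
  move=> cu; case: (wf_mem wV h) => _ uV ru.
  apply: False_ind; apply: (negP (FG r u _ ru)).
    by rewrite /G in_setU1 in_setU h orbT.
  have ruT : [set r; u] \notin T'.
    by apply/negP => /(wf_mem wW) [rW' _ _]; rewrite rW' in rW.
  rewrite csym in cu; apply: connect_trans _ cu.
  apply: connect_trans (connect1 _) (csub (TG _ ruT) (cW _ _ sW mW)).
  rewrite /adj in_setD1 setU11 andbT; apply/negP => /eqP /set2_eq [[_ su]|[_ sr]].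
  + by rewrite su uV in sV.
  + by rewrite sr eqxx in rs.
- apply/setP => x; rewrite inE; apply/idP/idP => [xV|].
  + exact: csub (EG _ rsE) (cV _ _ rV xV).
  move=> c.
  suff H : forall a b, a \in V -> adj (G :\ [set r; s]) a b ->
      adj (G :\ [set r; s]) a b && (b \in V).
    by case/andP: (connect_restrict H rV c).
  move=> a b aV0; rewrite /adj in_setD1 => /andP [ne /setU1P [h|]].
    by rewrite h eqxx in ne.
  rewrite in_setU => /orP [h|h].
  + by rewrite ne /G in_setU1 in_setU h orbT; case: (wf_mem wV h).
  + by case: (wf_mem wW h) => aW0 _ _; case: (disjF d' aV0 aW0).
- apply/setP => e; rewrite inE; apply/idP/idP => [eE|/andP [eG eV]].
  + rewrite (subsetP (EG _ rsE) _ eE) /=.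
    by case: (wV _ eE) => x [y [xV yV _ ->]]; rewrite subUset !sub1set xV yV.
  + move: eG; rewrite in_setD1 => /andP [ne /setU1P [h|]].
      by rewrite h eqxx in ne.
    rewrite in_setU => /orP [//|h].
    case: (wW _ h) => x [y [xW _ _ ee]].
    have xV : x \in V by apply: (subsetP eV); rewrite ee set21.
    by case: (disjF d' xV xW).
- apply/setP => e; rewrite inE; apply/idP/idP => [eT|/andP [eG eV]].
  + rewrite (subsetP (TG _ rsT) _ eT) /=.
    case: (wW _ eT) => x [y [xW _ _ ee]]; apply/negP => eV.
    have xV : x \in V by apply: (subsetP eV); rewrite ee set21.
    by case: (disjF d' xV xW).
  + move: eG; rewrite in_setD1 => /andP [ne /setU1P [h|]].
      by rewrite h eqxx in ne.
    rewrite in_setU => /orP [h|//].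
    case: (wV _ h) => x [y [xV yV _ ee]].
    by rewrite ee subUset !sub1set xV yV in eV.
Qed.

Lemma Ueq (X V W : {set T}) : X = V :|: W -> [disjoint V & W] -> W = X :\: V.
Proof.
move=> -> d; apply/setP => x; rewrite !inE.
case: (boolP (x \in V)) => xV /=; last by [].
by rewrite (disjointFr d xV).
Qed.

Lemma phi_inj f1 : forall f2 X, ordered_forest_on X f1 -> ordered_forest_on X f2 ->
  m \notin X -> phi f1 = phi f2 -> f1 = f2.
Proof.
elim: f1 => [|[[V1 E1] r1] f1 IH] [|[[V2 E2] r2] f2] X //.
- move=> _ /ofc [[rV _ _ _] _ _ ->] mX [] _ e.
  by rewrite e in_setU rV in mX.
- move=> /ofc [[rV _ _ _] _ _ ->] _ mX [] _ e.
  by rewrite -e in_setU rV in mX.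
- move=> of1 of2 mX [eG er]; subst r2.
  have [[p1 c1] u1 v1 e1 t1] := decomp of1 mX.
  have [[p2 c2] u2 v2 e2 t2] := decomp of2 mX.
  rewrite -eG in p2 c2 u2 v2 e2 t2.
  have es := u1 _ p2 c2.
  have eV : V1 = V2 by rewrite v1 v2 es.
  have eE : E1 = E2 by rewrite e1 e2 es -eV.
  have ephi : phi f1 = phi f2.
    by rewrite [phi f1]surjective_pairing [phi f2]surjective_pairing t1 t2 es -eV.
  rewrite -eV -eE in of2 *.
  move/ofc: of1 => [_ of1 d1 x1].
  move/ofc: of2 => [_ of2 d2 x2].
  have eU : U f1 = U f2 by rewrite (Ueq x1 d1) (Ueq x2 d2).
  rewrite -eU in of2.
  have mU : m \notin U f1 by move: mX; rewrite x1 in_setU negb_or => /andP [].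
  by rewrite (IH _ _ of1 of2 mU ephi).
Qed.


Lemma phi_surj k : forall (A : {set T}) (E : {set {set T}}) (r : T), #|A| <= k -> is_rooted_tree A E r -> m \in A ->
  is_leaf E r m -> exists f, ordered_forest_on (A :\ m) f /\ phi f = (E, r).
Proof.
elim: k => [|k IH] A E r hk tr mA lf.
  have h0 : 0 < #|A| by apply/card_gt0P; exists m.
  by rewrite leqNgt h0 in hk.
have [rA wA cA aA] := tr.
case: (r =P m) => [rm|rm].
  subst r.
  have Am : A = [set m].
    apply/setP => x; rewrite inE; apply/idP/eqP => [xA|->//].
    case: (x =P m) => // xm; exfalso.
    case/connectP: (cA m x mA xA) => [[|w p] /= pp lp]; first by apply: xm.
    case/andP: pp => h _; apply: (lf w); split; last exact: connect0.
    by rewrite /adj setUC in h.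
  have E0 : E = set0.
    apply/setP => e; rewrite inE; apply/negP => /wA [x [y [xA yA xy _]]].
    move: xA yA; rewrite Am !inE => /eqP xm /eqP ym.
    by rewrite xm ym eqxx in xy.
  exists [::]; split; last by rewrite E0.
  split=> //; by rewrite big_nil Am setDv.
have : connect (adj E) r m := cA r m rA mA.
case/connectP => p pp lp; case/shortenP: pp lp => p' pp' up' _ lp.
case: p' pp' up' lp => [|s q]; first by move=> _ _ /= mr; case: rm.
move=> pp uq lm; case/andP: pp => rsE pq.
have FE := acyc_F aA.
have [_ sA rs] := wf_mem wA rsE.
set E0 := E :\ [set r; s].
have nrs : ~~ connect (adj E0) r s := FE r s rsE rs.
have sm : connect (adj E0) s m.
  apply/connectP; exists q => //; apply: path_avoid pq.
  by case/andP: uq.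
set C1 := [set x | connect (adj E0) r x].
set C2 := [set x | connect (adj E0) s x].
have sub0 : E0 \subset E := subD1set _ _.
have tr1 := comp_tree r wA aA sub0.
have tr2 := comp_tree s wA aA sub0.
rewrite -/C1 in tr1; rewrite -/C2 in tr2.
have mC2 : m \in C2 by rewrite inE.
have dC : forall x, x \in C1 -> x \in C2 -> False.
  move=> x; rewrite !inE => h1 h2; apply: (negP nrs).
  by apply: connect_trans h1 _; rewrite csym.
have AC : forall x, x \in A -> (x \in C1) || (x \in C2).
  move=> x xA; have := cA r x rA xA; rewrite -(setD1K rsE) -/E0.
  by case/connect_addedge => [h|[[_ h]|[_ h]]]; rewrite !inE h ?orbT.
have CA : forall c, c \in A -> [set x | connect (adj E0) c x] \subset A.
  move=> c cA0; apply/subsetP => x; rewrite inE => c0.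
  have w0 : wf A E0 := wf_sub sub0 wA.
  suff H : forall a b, a \in A -> adj E0 a b -> adj E0 a b && (b \in A).
    by case/andP: (connect_restrict H cA0 c0).
  move=> a b _ h; rewrite h /=; by case: (wf_mem w0 h).
have CA2 : C2 \subset A := CA s sA.
have CA1 : C1 \subset A := CA r rA.
set E1 := [set e in E0 | e \subset C1].
set E2 := [set e in E0 | e \subset C2].
have E0eq : E0 = E1 :|: E2.
  apply/setP => e; rewrite !inE; apply/idP/idP => [eE0|]; last first.
    by case/orP => /andP [].
  rewrite eE0 /=.
  have := eE0; case/andP => ne0 /wA [a [b [aA0 bA0 _ ee]]].
  have ab : adj E0 a b by rewrite /adj -ee !inE ne0 /=; move: eE0 => /andP [].
  rewrite ee !subUset !sub1set.
  case/orP: (AC a aA0) => h; rewrite h /=; move: h; rewrite !inE => h;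
  by rewrite (connect_trans h (connect1 ab)) ?orbT.
have leaf2 : is_leaf E2 s m.
  move=> u [h c]; apply: (lf u); split.
    by move: h; rewrite inE in_setD1 => /andP [/andP [_ ->]].
  have ne : [set u; m] != [set r; s].
    by move: h; rewrite inE in_setD1 => /andP [/andP [-> _]].
  apply: connect_trans (connect1 _) (csub _ c).
    by rewrite /adj in_setD1 (rsE : [set r; s] \in E) andbT eq_sym.
  apply/subsetP => e; rewrite !in_setD1 inE => /andP [-> /andP [/(subsetP sub0) -> _]].
  done.
have hk2 : #|C2| <= k.
  have rC2 : r \notin C2.
    by apply/negP => h; apply: (dC r) => //; rewrite inE connect0.
  have : C2 \subset A :\ r.
    apply/subsetP => x xC; rewrite in_setD1 (subsetP CA2 _ xC) andbT.
    by apply/eqP => e; rewrite -e xC in rC2.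
  move/subset_leq_card; move: hk; rewrite (cardsD1 r A) rA add1n ltnS.
  by move=> h1 h2; apply: leq_trans h2 h1.
have [f' [of' ph']] := IH C2 E2 s hk2 tr2 mC2 leaf2.
exists ((C1, E1, r) :: f'); split.
- have Uf : U f' = C2 :\ m by case: of'.
  apply/ofc; rewrite Uf; split=> //.
  + by apply: disjP' => x h1; rewrite in_setD1 => /andP [_ h2]; exact: dC h1 h2.
  + apply/setP => x; rewrite in_setU !in_setD1; apply/idP/idP.
    * case/andP => xm xA; case/orP: (AC x xA) => -> //; by rewrite xm orbT.
    * case/orP => [h|/andP [xm h]]; last by rewrite xm (subsetP CA2 _ h).
      rewrite (subsetP CA1 _ h) andbT.
      by apply/eqP => e; rewrite e in h; exact: dC h mC2.
- by rewrite /= ph' /= -E0eq setD1K.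
Qed.


Lemma main_gen (A : {set T}) : m \in A ->
  exists rho : {set {set T}} * T -> seq ({set T} * {set {set T}} * T),
    bij_between (fun t => rooted_tree_on A t /\ is_leaf t.1 t.2 m)
                (ordered_forest_on (A :\ m)) rho.
Proof.
move=> mA.
have surj : forall t, rooted_tree_on A t /\ is_leaf t.1 t.2 m ->
    exists f, ordered_forest_on (A :\ m) f /\ phi f = t.
  move=> [E r] [tr lf]; exact: (phi_surj (leqnn #|A|) tr mA lf).
have valid : forall f, ordered_forest_on (A :\ m) f ->
    rooted_tree_on A (phi f) /\ is_leaf (phi f).1 (phi f).2 m.
  move=> f hf.
  have mX : m \notin A :\ m by rewrite setD11.
  have [tr uq r0] := phi_valid hf mX.
  rewrite setD1K // in tr; split; first exact: tr.
  case: ((phi f).2 =P m) => [e|ne].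
    by move=> u [h _]; move: h; rewrite (r0 e) inE.
  by apply: leaf_of => //; apply/eqP.
have inj : forall f1 f2, ordered_forest_on (A :\ m) f1 -> ordered_forest_on (A :\ m) f2 ->
    phi f1 = phi f2 -> f1 = f2.
  move=> f1 f2 h1 h2; apply: (phi_inj h1 h2); by rewrite setD11.
pose rho t := match excluded_middle_informative
    (exists f, ordered_forest_on (A :\ m) f /\ phi f = t) with
  | left h => proj1_sig (constructive_indefinite_description _ h)
  | right _ => [::] end.
have rhoP : forall t, rooted_tree_on A t /\ is_leaf t.1 t.2 m ->
    ordered_forest_on (A :\ m) (rho t) /\ phi (rho t) = t.
  move=> t Pt; rewrite /rho; case: excluded_middle_informative => [h|h].
  - by destruct (constructive_indefinite_description _ h) as [f [hf ef]].
  - by exfalso; apply: h; apply: surj.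
exists rho; split.
- by move=> t /rhoP [].
- by move=> t1 t2 /rhoP [_ e1] /rhoP [_ e2] e; rewrite -e1 -e2 e.
- move=> f Qf; exists (phi f); split; first exact: valid.
  have [Q' e] := rhoP _ (valid f Qf).
  exact: inj _ _ Q' Qf e.
Qed.

End F.

(* [n] = {1,...,n} is represented by the nonzero elements of 'I_n.+1.
   A is nonempty and m = max(A). *)
Theorem lemma2p2 (n : nat) (A : {set 'I_n.+1})
  (hA : A \subset [set i : 'I_n.+1 | 0 < val i])
  (hne : A != set0)
  (m : 'I_n.+1) (hm : m \in A) (hmax : forall a, a \in A -> val a <= val m) :
  exists rho : {set {set 'I_n.+1}} * 'I_n.+1 ->
               seq ({set 'I_n.+1} * {set {set 'I_n.+1}} * 'I_n.+1),
    bij_between (fun t => rooted_tree_on A t /\ is_leaf t.1 t.2 m)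
                (ordered_forest_on (A :\ m)) rho.
Proof. exact: main_gen hm. Qed.
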